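(* Let $n\ge1$ and let $\mathbf 1=(1,1,\dots,1)$ ($n$ entries). Then (i) the map $w\mapsto\varphi_r((w,\mathbf 1))$ is a bijection from $M_{rb}(n)$ onto the set $NC_n$ of noncrossing partitions of $[n]$; (ii) the map $w\mapsto\varphi_l((w,\mathbf 1))$ is a bijection from $M_{rb}(n)$ onto the set $NN_n$ of nonnesting partitions of $[n]$.
   Context: A Motzkin path of length $n$ is a sequence of points $s_0=(0,0),s_1,\dots,s_n=(n,0)$, $s_i=(i,y_i)$, $y_i\ge0$, each step $(s_{i-1},s_i)$ East, North-East or South-East ($y_i-y_{i-1}=0,1,-1$); step $(s_{i-1},s_i)$ has index $i$ and height $y_{i-1}$. A restricted bicolored Motzkin path is a Motzkin path whose East steps are colored red or blue, every blue East step having height $>0$; $M_{rb}(n)$ is the set of these of length $n$. A Charlier diagram of length $n$ is a pair $(w,\xi)$, $w\in M_{rb}(n)$, $\xi=(\xi_1,\dots,\xi_n)$ integers with $\xi_i=1$ if step $i$ is North-East or red East, and $1\le\xi_i\le k$ if step $i$ is South-East or blue East of height $k$. $\varphi_l(w,\xi)$ is the partition of $[n]$ obtained thus: maintain a set $V$ (initially empty) and edge set $E$; for $i=1,\dots,n$: if step $i$ is North-East add $i$ to $V$; if red East do nothing; if South-East or blue East, let $x$ be the $\xi_i$-th smallest element of $V$, add edge $(x,i)$, remove $x$ from $V$, and if blue East add $i$ to $V$; the blocks are the connected components of $([n],E)$. $\varphi_r$ is the same with ''$\xi_i$-th largest''. For a partition of $[n]$ (set of disjoint nonempty blocks covering $[n]$),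 edges are pairs $(i,j)$, $i<j$, of consecutive elements of a block; two edges $(i_1,j_1),(i_2,j_2)$ cross if $i_1<i_2<j_1<j_2$ and nest if $i_1<i_2<j_2<j_1$. A partition is noncrossing (resp. nonnesting) if no two of its edges cross (resp. nest). *)

(* Defs.v *)
From HB Require Import structures.
From mathcomp Require Import all_boot.
Set Implicit Arguments. Unset Strict Implicit. Unset Printing Implicit Defensive.

Inductive step := NE | SE | RedE | BlueE.

Definition step_code (s : step) : nat :=
  match s with NE => 0 | SE => 1 | RedE => 2 | BlueE => 3 end.
Definition code_step (n : nat) : step :=
  match n with 0 => NE | 1 => SE | 2 => RedE | _ => BlueE end.
Lemma step_codeK : cancel step_code code_step. Proof. by case. Qed.
HB.instance Definition _ := Equality.copy step (can_type step_codeK).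

Fixpoint rb_from (h : nat) (s : seq step) : bool :=
  match s with
  | [::] => h == 0
  | NE :: s' => rb_from h.+1 s'
  | SE :: s' => (0 < h) && rb_from h.-1 s'
  | RedE :: s' => rb_from h s'
  | BlueE :: s' => (0 < h) && rb_from h s'
  end.

Definition Mrb (n : nat) (w : seq step) : bool := (size w == n) && rb_from 0 w.

(* Selection of the xi-th smallest (left = true) or xi-th largest
   (left = false) element of V; V is kept as an increasing list. *)
Definition pickV (left : bool) (V : seq nat) (k : nat) : nat :=
  if left then nth 0 V k.-1 else nth 0 (rev V) k.-1.

(* The edge-building process of phi_l / phi_r.  i is the (1-based) index
   of the current step; xi is the remaining sequence (xi_i, xi_{i+1}, ...).
   Returns the edge set E as a list of pairs (x, i). *)
Fixpoint phi_edges (left : bool) (i : nat) (s : seq step) (xi : seq nat)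
    (V : seq nat) (E : seq (nat * nat)) : seq (nat * nat) :=
  match s with
  | [::] => E
  | st :: s' =>
    let k := head 0 xi in
    let xi' := behead xi in
    match st with
    | NE => phi_edges left i.+1 s' xi' (rcons V i) E
    | RedE => phi_edges left i.+1 s' xi' V E
    | SE => let x := pickV left V k in
            phi_edges left i.+1 s' xi' (rem x V) ((x, i) :: E)
    | BlueE => let x := pickV left V k in
            phi_edges left i.+1 s' xi' (rcons (rem x V) i) ((x, i) :: E)
    end
  end.

(* [n] = {1,...,n} is represented by 'I_n, element j : 'I_n standing for j+1. *)
Definition edge_adj (n : nat) (E : seq (nat * nat)) : rel 'I_n :=
  fun a b => ((a.+1, b.+1) \in E) || ((b.+1, a.+1) \in E).

Definition components (n : nat) (E : seq (nat * nat)) : {set {set 'I_n}} :=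
  [set [set y | connect (edge_adj E) x y] | x : 'I_n].

Definition phi_gen (left : bool) (n : nat) (w : seq step) (xi : seq nat)
  : {set {set 'I_n}} := components n (phi_edges left 1 w xi [::] [::]).

Definition phi_l (n : nat) (w : seq step) (xi : seq nat) := phi_gen true n w xi.
Definition phi_r (n : nat) (w : seq step) (xi : seq nat) := phi_gen false n w xi.

Definition is_edge (n : nat) (P : {set {set 'I_n}}) (i j : 'I_n) : bool :=
  [exists B in P, [&& i \in B, j \in B, i < j &
                      [forall k in B, ~~ ((i < k) && (k < j))]]].

Definition noncrossing (n : nat) (P : {set {set 'I_n}}) : bool :=
  [forall i1, forall j1, forall i2, forall j2,
     (is_edge P i1 j1 && is_edge P i2 j2) ==>
     ~~ [&& i1 < i2, i2 < j1 & j1 < j2]].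

Definition nonnesting (n : nat) (P : {set {set 'I_n}}) : bool :=
  [forall i1, forall j1, forall i2, forall j2,
     (is_edge P i1 j1 && is_edge P i2 j2) ==>
     ~~ [&& i1 < i2, i2 < j2 & j2 < j1]].

Definition NC (n : nat) : {set {set {set 'I_n}}} :=
  [set P | partition P [set: 'I_n] & noncrossing P].
Definition NN (n : nat) : {set {set {set 'I_n}}} :=
  [set P | partition P [set: 'I_n] & nonnesting P].

Definition bij_onto (n : nat) (A : pred (seq step))
    (f : seq step -> {set {set 'I_n}}) (S : {set {set {set 'I_n}}}) : Prop :=
  [/\ (forall w, A w -> f w \in S),
      (forall w1 w2, A w1 -> A w2 -> f w1 = f w2 -> w1 = w2) &
      (forall P, P \in S -> exists2 w, A w & f w = P)].

(* Main.v *)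
Require Import Defs.
From mathcomp Require Import all_boot.
From mathcomp Require Import zify.
Set Implicit Arguments. Unset Strict Implicit. Unset Printing Implicit Defensive.
Set Warnings "-notation-overridden".

Definition stepf (left : bool) (VE : seq nat * seq (nat * nat)) (p : nat * step)
  : seq nat * seq (nat * nat) :=
  match p.2 with
  | NE => (rcons VE.1 p.1, VE.2)
  | RedE => VE
  | SE => let x := pickV left VE.1 1 in (rem x VE.1, (x, p.1) :: VE.2)
  | BlueE => let x := pickV left VE.1 1 in (rcons (rem x VE.1) p.1, (x, p.1) :: VE.2)
  end.

Lemma phi_edges_fold left i s V E :
  phi_edges left i s (nseq (size s) 1) V E =
  (foldl (stepf left) (V, E) (zip (iota i (size s)) s)).2.
Proof.
elim: s i V E => [|st s IH] i V E //=.
by case: st; rewrite IH.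
Qed.

Definition state left (w : seq step) t :=
  foldl (stepf left) ([::], [::]) (zip (iota 1 t) (take t w)).

Lemma iotaS1 t : iota 1 t.+1 = rcons (iota 1 t) t.+1.
Proof. by rewrite -[t.+1]addn1 iotaD cats1 add1n addn1. Qed.

Lemma state_S left w t : t < size w ->
  state left w t.+1 = stepf left (state left w t) (t.+1, nth RedE w t).
Proof.
move=> ht; rewrite /state iotaS1 (take_nth RedE ht) zip_rcons.
  by rewrite foldl_rcons.
by rewrite size_iota size_take ht.
Qed.

Lemma state0 left w : state left w 0 = ([::], [::]).
Proof. by rewrite /state take0. Qed.

Lemma phi_state left n w : size w = n ->
  phi_gen left n w (nseq n 1) = components n (state left w n).2.
Proof.
move=> <-; by rewrite /phi_gen phi_edges_fold /state take_size.
Qed.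

Section Fwd.
Variables (T : Type) (e : T -> T -> bool).
Inductive fwd : T -> T -> Prop :=
| fwd0 x : fwd x x
| fwdS x y z : e x y -> fwd y z -> fwd x z.

Lemma fwd_trans x y z : fwd x y -> fwd y z -> fwd x z.
Proof. by elim=> // a b c eab _ IH /IH; apply: fwdS. Qed.

Lemma fwd1 x y : e x y -> fwd x y.
Proof. by move=> h; apply: fwdS h (fwd0 _). Qed.

Lemma fwd_last x y : fwd x y -> x = y \/ exists u, fwd x u /\ e u y.
Proof.
elim=> [a|a b c eab fbc [<-|[u [fbu euc]]]]; first by left.
  by right; exists a; split=> //; apply: fwd0.
by right; exists u; split=> //; apply: fwdS eab fbu.
Qed.
End Fwd.

Section Chain.
Variables (n : nat) (E : seq (nat * nat)).
Definition ech (a b : nat) : bool := (a.+1, b.+1) \in E.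
Hypothesis H1 : forall a b, ech a b -> a < b < n.
Hypothesis H2 : forall a b b', ech a b -> ech a b' -> b = b'.
Hypothesis H3 : forall a a' b, ech a b -> ech a' b -> a = a'.

Lemma fwd_le a b : fwd ech a b -> a <= b.
Proof.
elim=> // x y z /H1 /andP [xy _] _ yz; exact: leq_trans (ltnW xy) yz.
Qed.

Lemma fwd_first a b : fwd ech a b -> a <> b -> exists c, ech a c /\ fwd ech c b.
Proof. by case=> [x //|x y z exy fyz] _; exists y. Qed.

Lemma comp_tgt y x z : fwd ech y x -> fwd ech y z -> fwd ech x z \/ fwd ech z x.
Proof.
move=> h; elim: h z => [a|a c b eac fcb IH] z fz; first by left.
case: fz eac => [a' eac|a' d z' ead fdz eac]; first by right; apply: fwdS eac fcb.
by rewrite (H2 eac ead) in IH; apply: IH.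
Qed.

Lemma comp_src y : forall x z, fwd ech x y -> fwd ech z y -> fwd ech x z \/ fwd ech z x.
Proof.
elim: y {-2}y (leqnn y) => [|m IHm] y hy x z fx fz.
  move: hy; rewrite leqn0 => /eqP y0; subst y.
  have x0 := fwd_le fx; have z0 := fwd_le fz.
  move: x0 z0; rewrite !leqn0 => /eqP -> /eqP ->; left; exact: fwd0.
case: (fwd_last fx) => [xy|[u [fxu euy]]]; first by subst x; right.
case: (fwd_last fz) => [zy|[u' [fzu' eu'y]]]; first by subst z; left.
have uu := H3 euy eu'y; subst u'.
apply: (IHm u) => //.
by have /andP [uy _] := H1 euy; rewrite -ltnS (leq_trans uy hy).
Qed.

Definition Rch a b := fwd ech a b \/ fwd ech b a.

Lemma Rch_trans a b c : Rch a b -> Rch b c -> Rch a c.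
Proof.
move=> [ab|ba] [bc|cb].
- by left; apply: fwd_trans ab bc.
- exact: comp_src ab cb.
- exact: comp_tgt ba bc.
- by right; apply: fwd_trans cb ba.
Qed.

Lemma edge_adj_ech (x y : 'I_n) : edge_adj E x y = ech x y || ech y x.
Proof. by []. Qed.

Lemma fwd_connect a b : fwd ech a b -> forall (x y : 'I_n), val x = a -> val y = b ->
  connect (edge_adj E) x y.
Proof.
elim=> [c|c d f ecd _ IH] x y xa yb.
  by have -> : x = y by apply: val_inj; rewrite xa yb.
have /andP [_ dn] := H1 ecd.
apply: (connect_trans (y := Ordinal dn)); last by apply: IH.
by apply: connect1; rewrite edge_adj_ech /= xa ecd.
Qed.

Lemma connect_Rch (x y : 'I_n) : connect (edge_adj E) x y <-> Rch x y.
Proof.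
split.
  move=> /connectP [p]; elim: p x => [|z p IH] x /=.
    by move=> _ ->; left; apply: fwd0.
  move=> /andP [exz pz] yl; apply: (Rch_trans (b := z)); last exact: IH.
  by move: exz; rewrite edge_adj_ech => /orP [h|h]; [left|right]; apply: fwd1.
case=> h.
  exact: fwd_connect h _ _ (erefl _) (erefl _).
rewrite (@sym_connect_sym _ (edge_adj E)); last first.
  by move=> a b; rewrite !edge_adj_ech orbC.
exact: fwd_connect h _ _ (erefl _) (erefl _).
Qed.

Lemma is_edge_comp (i j : 'I_n) : is_edge (components n E) i j = ech i j.
Proof.
apply/idP/idP.
  case/existsP=> B /andP [] /imsetP [x _ ->] /and4P [].
  rewrite !inE => ci cj ij /forallP hk.
  have : Rch i j.
    apply/connect_Rch; apply: connect_trans cj.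
    by rewrite (@sym_connect_sym _ (edge_adj E)) // => a b; rewrite !edge_adj_ech orbC.
  case=> [fij|fji]; last by have := fwd_le fji; rewrite leqNgt ij.
  have [|c [eic fcj]] := fwd_first fij; first by move=> h; rewrite h ltnn in ij.
  have /andP [ic cn] := H1 eic.
  have := fwd_le fcj; rewrite leq_eqVlt => /orP [/eqP cj0|cj2]; first by rewrite -cj0.
  have hc : connect (edge_adj E) x (Ordinal cn).
    apply: connect_trans ci _; apply: connect1; by rewrite edge_adj_ech /= eic.
  by have := hk (Ordinal cn); rewrite inE hc /= ic cj2.
move=> eij; have /andP [ij jn] := H1 eij.
apply/existsP; exists [set y | connect (edge_adj E) i y].
rewrite imset_f //= !inE connect0 /= ij.
rewrite (connect1 (_ : edge_adj E i j)) ?edge_adj_ech ?eij //=.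
apply/forallP=> k; rewrite inE; apply/implyP=> /connect_Rch [fik|fki].
  case: (altP (i =P k)) => [<-|ik]; first by rewrite ltnn.
  have [c [eic fck]] := fwd_first fik (fun h => negP ik (introT eqP (val_inj h))).
  rewrite (H2 eic eij) in fck; have := fwd_le fck.
  by rewrite leqNgt => /negbTE ->; rewrite andbF.
by have := fwd_le fki; rewrite leqNgt => /negbTE ->.
Qed.
End Chain.

Lemma components_partition n E : partition (components n E) [set: 'I_n].
Proof.
have eqv : {in [set: 'I_n] & &, equivalence_rel (connect (edge_adj E))}.
  move=> x y z _ _ _; split; first exact: connect0.
  move=> cxy; apply/idP/idP => h.
    apply: connect_trans h.
    by rewrite (@sym_connect_sym _ (edge_adj E)) // => a b; rewrite !edge_adj_ech orbC.
  exact: connect_trans cxy h.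
have := equivalence_partitionP eqv.
rewrite /equivalence_partition /components.
suff -> : [set [set y in [set: 'I_n] | connect (edge_adj E) x y] | x in [set: 'I_n]]
  = [set [set y | connect (edge_adj E) x y] | x : 'I_n] by [].
apply/setP => B; apply/imsetP/imsetP => [[x _ ->]|[x _ ->]]; exists x => //;
  by apply/setP=> y; rewrite !inE.
Qed.

Section PartEdge.
Variables (n : nat) (P : {set {set 'I_n}}).
Hypothesis hP : partition P [set: 'I_n].

Let trP : trivIset P. Proof. by case/and3P: hP. Qed.
Let covP x : x \in cover P. Proof. by rewrite (cover_partition hP) inE. Qed.

Lemma is_edgeP (i j : 'I_n) : is_edge P i j ->
  [/\ j \in pblock P i, i < j & forall k, k \in pblock P i -> ~~ ((i < k) && (k < j))].
Proof.
case/existsP=> B /andP [BP /and4P [iB jB ij /forallP hk]].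
rewrite (def_pblock trP BP iB); split=> // k kB.
by have /implyP := hk k; apply.
Qed.

Lemma is_edgeI (i j : 'I_n) : j \in pblock P i -> i < j ->
  (forall k, k \in pblock P i -> ~~ ((i < k) && (k < j))) -> is_edge P i j.
Proof.
move=> jB ij hk; apply/existsP; exists (pblock P i).
rewrite pblock_mem ?covP //= mem_pblock covP jB ij /=.
by apply/forallP=> k; apply/implyP; apply: hk.
Qed.

Lemma edge_out (i j j' : 'I_n) : is_edge P i j -> is_edge P i j' -> j = j'.
Proof.
move=> /is_edgeP [jB ij hj] /is_edgeP [j'B ij' hj'].
apply: val_inj; case: (ltngtP j j') => // h.
  by have := hj' j jB; rewrite ij h.
by have := hj j' j'B; rewrite ij' h.
Qed.

Lemma edge_in (i i' j : 'I_n) : is_edge P i j -> is_edge P i' j -> i = i'.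
Proof.
move=> /is_edgeP [jB ij hi] /is_edgeP [jB' i'j hi'].
have e1 : pblock P j = pblock P i by apply: same_pblock.
have e2 : pblock P j = pblock P i' by apply: same_pblock.
apply: val_inj; case: (ltngtP i i') => // h.
  have : i' \in pblock P i by rewrite -e1 e2 mem_pblock covP.
  by move/hi; rewrite h i'j.
have : i \in pblock P i' by rewrite -e2 e1 mem_pblock covP.
by move/hi'; rewrite h ij.
Qed.

Lemma fwd_block x y : fwd (is_edge P) x y -> y \in pblock P x.
Proof.
elim=> [a|a b c eab _ IH]; first by rewrite mem_pblock covP.
have [bB _ _] := is_edgeP eab.
by rewrite -(same_pblock trP bB).
Qed.

Lemma block_fwd d : forall x y : 'I_n, y - x <= d -> y \in pblock P x -> x < y ->
  fwd (is_edge P) x y.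
Proof.
elim: d => [|d IH] x y hd yB xy; first by move: hd; rewrite leqn0 subn_eq0 leqNgt xy.
pose S := [pred k : 'I_n | (k \in pblock P x) && (x < k)].
have Sy : S y by rewrite /S /= yB xy.
case: (arg_minnP (fun k : 'I_n => val k) Sy) => m /andP [mB xm] hm.
have exm : is_edge P x m.
  apply: is_edgeI => // k kB; apply/negP => /andP [xk km].
  by have := hm k; rewrite /S /= kB xk leqNgt km => /(_ isT).
have my : m <= y by apply: hm.
move: my; rewrite leq_eqVlt => /orP [/eqP my|my].
  have my' : m = y by apply: val_inj.
  by rewrite -my'; exact: fwd1.
apply: fwdS exm _; apply: IH => //.
- by rewrite -ltnS (leq_trans _ hd) // ltn_sub2l // (ltn_trans xm my).
- by rewrite (same_pblock trP mB).
Qed.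

Lemma pblock_fwd x y : y \in pblock P x <-> fwd (is_edge P) x y \/ fwd (is_edge P) y x.
Proof.
split=> [yB|[h|h]].
- case: (ltngtP x y) => h.
  + by left; apply: (block_fwd (leqnn _)).
  + right; apply: (block_fwd (leqnn _)) => //.
    by rewrite (same_pblock trP yB) mem_pblock covP.
  + have -> : x = y by apply: val_inj.
    left; exact: fwd0.
- exact: fwd_block.
- have xB := fwd_block h.
  by rewrite (same_pblock trP xB) mem_pblock covP.
Qed.
End PartEdge.

Lemma partition_eq n (P Q : {set {set 'I_n}}) :
  partition P [set: 'I_n] -> partition Q [set: 'I_n] ->
  (forall i j, is_edge P i j = is_edge Q i j) -> P = Q.
Proof.
move=> hP hQ he.
have fe x y : fwd (is_edge P) x y -> fwd (is_edge Q) x y.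
  by elim=> [a|a b c eab _ IH]; [apply: fwd0|apply: fwdS IH; rewrite -he].
have fe' x y : fwd (is_edge Q) x y -> fwd (is_edge P) x y.
  by elim=> [a|a b c eab _ IH]; [apply: fwd0|apply: fwdS IH; rewrite he].
have H x y : (y \in pblock P x) = (y \in pblock Q x).
  apply/idP/idP => h.
    apply/(pblock_fwd hQ); case/(pblock_fwd hP): h => h; [left|right]; exact: fe.
  apply/(pblock_fwd hP); case/(pblock_fwd hQ): h => h; [left|right]; exact: fe'.
rewrite -(equivalence_partition_pblock hP) -(equivalence_partition_pblock hQ).
apply/setP => B; rewrite /equivalence_partition.
apply/imsetP/imsetP => [[x _ ->]|[x _ ->]]; exists x => //;
  by apply/setP=> y; rewrite !inE H.
Qed.

Lemma pickV_spec lf V : sorted ltn V -> V != [::] ->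
  pickV lf V 1 \in V /\ (forall y, y \in V -> y != pickV lf V 1 ->
     if lf then pickV lf V 1 < y else y < pickV lf V 1).
Proof.
case: lf; rewrite /pickV /=.
  case: V => // x V' /= hs _; split; first by rewrite inE eqxx.
  move=> y; rewrite inE => /orP [/eqP->|yV]; first by rewrite eqxx.
  by move=> _; exact: (allP (order_path_min ltn_trans hs)) y yV.
move=> hs hV; have : sorted (fun a b => b < a) (rev V) by rewrite rev_sorted.
have : rev V != [::] by rewrite -size_eq0 size_rev size_eq0.
case E: (rev V) => [|x V'] // _ /= hs'; split; first by rewrite -mem_rev E inE eqxx.
move=> y; rewrite -mem_rev E inE => /orP [/eqP->|yV]; first by rewrite eqxx.
have tr : transitive (fun a b : nat => b < a) by move=> a b c ba cb; apply: ltn_trans ba.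
move=> _; exact: (allP (order_path_min tr hs')) y yV.
Qed.

Definition isOut s := (s == NE) || (s == BlueE).
Definition isIn s := (s == SE) || (s == BlueE).
Definition wt (w : seq step) a := nth RedE w a.-1.

Lemma step_eq s1 s2 : isOut s1 = isOut s2 -> isIn s1 = isIn s2 -> s1 = s2.
Proof. by case: s1; case: s2. Qed.

Record Inv2 lf w t (V : seq nat) (E : seq (nat * nat)) : Prop := {
 iV : V = [seq a <- iota 1 t | isOut (wt w a) && (a \notin map fst E)];
 iE : forall e, e \in E -> [&& 0 < e.1, e.1 < e.2, e.2 <= t, isOut (wt w e.1) & isIn (wt w e.2)];
 iU1 : uniq (map fst E);
 iU2 : uniq (map snd E);
 iIn : forall b, 0 < b <= t -> isIn (wt w b) -> b \in map snd E;
 iCh : forall a b a', (a,b) \in E -> a' != a -> a' < b ->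
        (a' \in V) || has (fun e => (e.1 == a') && (b < e.2)) E ->
        if lf then a < a' else a' < a;
 iRb : rb_from (size V) (drop t w) }.

Lemma Inv2_0 lf w : Mrb (size w) w -> Inv2 lf w 0 [::] [::].
Proof.
case/andP=> _ rb; split=> //.
- by move=> b /andP [b0 bt]; move: (leq_trans b0 bt).
- by rewrite drop0.
Qed.

Lemma notin_fst lf w t V E : Inv2 lf w t V E -> t.+1 \notin map fst E.
Proof.
move=> I; apply/mapP => [[e eE et]].
have /and5P [_ h1 h2 _ _] := iE I eE; move: h1 h2; rewrite -et; lia.
Qed.

Lemma notin_snd lf w t V E : Inv2 lf w t V E -> t.+1 \notin map snd E.
Proof.
move=> I; apply/mapP => [[e eE et]].
have /and5P [_ h1 h2 _ _] := iE I eE; move: h1 h2; rewrite -et; lia.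
Qed.

Lemma Inv2_S lf w t V E : t < size w -> Inv2 lf w t V E ->
  Inv2 lf w t.+1 (stepf lf (V,E) (t.+1, nth RedE w t)).1
                 (stepf lf (V,E) (t.+1, nth RedE w t)).2.
Proof.
move=> ht I.
have wt1 : wt w t.+1 = nth RedE w t by [].
have dr : drop t w = nth RedE w t :: drop t.+1 w by apply: drop_nth.
have nf := notin_fst I; have ns := notin_snd I.
have rb := iRb I; rewrite dr in rb.
have sV : sorted ltn V.
  by rewrite (iV I); apply: sorted_filter; [exact: ltn_trans | exact: iota_ltn_sorted].
have uV : uniq V by rewrite (iV I) filter_uniq // iota_uniq.
have memV a : a \in V = (a \in iota 1 t) && (isOut (wt w a) && (a \notin map fst E)).
  by rewrite {1}(iV I) mem_filter andbC.
have Eb e : e \in E -> e.2 <= t by move=> /(iE I) /and5P [].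
case hst : (nth RedE w t) rb wt1 => [|||] /= rb wt1.
- split.
  + by rewrite iotaS1 filter_rcons wt1 /= nf -(iV I).
  + move=> e /(iE I) /and5P [-> -> h -> ->]; by rewrite (leq_trans h).
  + exact: iU1 I.
  + exact: iU2 I.
  + move=> b /andP [b0]; rewrite leq_eqVlt => /orP [/eqP ->|bt]; first by rewrite wt1.
    by apply: (iIn I); rewrite b0.
  + move=> a b a' ab a'a a'b; rewrite mem_rcons inE => /orP [/orP [/eqP a't|a'V]|hs].
    * have := Eb _ ab => /= h; move: a'b h; rewrite a't; lia.
    * by apply: (iCh I ab) => //; rewrite a'V.
    * by apply: (iCh I ab) => //; rewrite hs orbT.
  + by rewrite size_rcons.
-
  have V0 : V != [::] by move: rb => /andP [h _]; rewrite -size_eq0 -lt0n.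
  have [xV xext] := pickV_spec lf sV V0.
  set x := pickV lf V 1 in xV xext *.
  have := memV x; rewrite xV => /esym /andP [xi /andP [xo xn]].
  move: xi; rewrite mem_iota add1n => /andP [x0 xt].
  have remE : rem x V = [seq a <- iota 1 t | isOut (wt w a) && (a \notin x :: map fst E)].
    rewrite (rem_filter _ uV) {1}(iV I) -filter_predI; apply: eq_filter => a.
    by rewrite /= in_cons negb_or; case: (a == x) => /=; rewrite ?andbF.
  have new a' : (a' \in rem x V) || has (fun e => (e.1 == a') && (t.+1 < e.2)) ((x, t.+1) :: E) -> a' \in V.
    move=> /orP [/mem_rem //|/= /orP [/andP [/eqP <- _] //|/hasP [e eE /andP [_ te]]]].
    by have := Eb _ eE; rewrite leqNgt (ltnW te).
  split.
  + by rewrite iotaS1 filter_rcons wt1 remE.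
  + move=> e; rewrite inE => /orP [/eqP -> /=|/(iE I) /and5P [-> -> h -> ->]]; last by rewrite (leq_trans h).
    by rewrite x0 xt leqnn xo wt1.
  + by rewrite /= xn (iU1 I).
  + by rewrite /= ns (iU2 I).
  + move=> b /andP [b0]; rewrite leq_eqVlt => /orP [/eqP ->|bt]; first by rewrite inE eqxx.
    by move=> hb; rewrite inE (iIn I) ?orbT // b0.
  + move=> a b a'; rewrite inE => /orP [/eqP [-> ->]|ab] a'a a'b hh.
      have a'V := new _ hh.
      exact: xext a'V a'a.
    apply: (iCh I ab) => //.
    move: hh => /orP [/mem_rem ->//|/= /orP [/andP [/eqP <- _]|->]]; last by rewrite orbT.
    by rewrite xV.
  + by move: rb => /andP [_ rb]; rewrite size_rem.
- split.
  + by rewrite iotaS1 filter_rcons wt1 /= -(iV I).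
  + move=> e /(iE I) /and5P [-> -> h -> ->]; by rewrite (leq_trans h).
  + exact: iU1 I.
  + exact: iU2 I.
  + move=> b /andP [b0]; rewrite leq_eqVlt => /orP [/eqP ->|bt]; first by rewrite wt1.
    by apply: (iIn I); rewrite b0.
  + exact: iCh I.
  + by [].
-
  have V0 : V != [::] by move: rb => /andP [h _]; rewrite -size_eq0 -lt0n.
  have [xV xext] := pickV_spec lf sV V0.
  set x := pickV lf V 1 in xV xext *.
  have := memV x; rewrite xV => /esym /andP [xi /andP [xo xn]].
  move: xi; rewrite mem_iota add1n => /andP [x0 xt].
  have remE : rem x V = [seq a <- iota 1 t | isOut (wt w a) && (a \notin x :: map fst E)].
    rewrite (rem_filter _ uV) {1}(iV I) -filter_predI; apply: eq_filter => a.
    by rewrite /= in_cons negb_or; case: (a == x) => /=; rewrite ?andbF.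
  have new a' : (a' \in rem x V) || has (fun e => (e.1 == a') && (t.+1 < e.2)) ((x, t.+1) :: E) -> a' \in V.
    move=> /orP [/mem_rem //|/= /orP [/andP [/eqP <- _] //|/hasP [e eE /andP [_ te]]]].
    by have := Eb _ eE; rewrite leqNgt (ltnW te).
  split.
  + rewrite iotaS1 filter_rcons wt1 remE /= in_cons (negbTE nf) orbF.
    by have -> : (t.+1 == x) = false by apply/negbTE; rewrite neq_ltn xt orbT.
  + move=> e; rewrite inE => /orP [/eqP -> /=|/(iE I) /and5P [-> -> h -> ->]]; last by rewrite (leq_trans h).
    by rewrite x0 xt leqnn xo wt1.
  + by rewrite /= xn (iU1 I).
  + by rewrite /= ns (iU2 I).
  + move=> b /andP [b0]; rewrite leq_eqVlt => /orP [/eqP ->|bt]; first by rewrite inE eqxx.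
    by move=> hb; rewrite inE (iIn I) ?orbT // b0.
  + move=> a b a'; rewrite inE => /orP [/eqP [-> ->]|ab] a'a a'b; rewrite mem_rcons inE -orbA.
      case/orP => [/eqP a't|hh]; first by move: a'b; rewrite a't ltnn.
      exact: xext (new _ hh) a'a.
    case/orP => [/eqP a't|hh].
      by have := Eb _ ab => /= h; move: a'b h; rewrite a't; lia.
    apply: (iCh I ab) => //.
    move: hh => /orP [/mem_rem ->//|/= /orP [/andP [/eqP <- _]|->]]; last by rewrite orbT.
    by rewrite xV.
  + move: rb => /andP [h rb]; by rewrite size_rcons size_rem // prednK.
Qed.

Lemma Inv2_state lf w t : Mrb (size w) w -> t <= size w ->
  Inv2 lf w t (state lf w t).1 (state lf w t).2.
Proof.
move=> hw; elim: t => [|t IH] ht; first by rewrite state0; apply: Inv2_0.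
rewrite state_S //.
have := Inv2_S ht (IH (ltnW ht)).
by case: (state lf w t).
Qed.

Lemma uniq_map_eq (T1 T2 : eqType) (f : T1 -> T2) s x y :
  uniq (map f s) -> x \in s -> y \in s -> f x = f y -> x = y.
Proof.
elim: s => [|z s IH] //= /andP [nz us]; rewrite !inE.
case/orP=> [/eqP ->|xs]; case/orP=> [/eqP ->|ys] // fe.
- by move: nz; rewrite fe (map_f f ys).
- by move: nz; rewrite -fe (map_f f xs).
- exact: IH.
Qed.

Section Final2.
Variables (lf : bool) (n : nat) (w : seq step).
Hypothesis hw : Mrb n w.
Let sw : size w = n. Proof. by case/andP: hw => /eqP. Qed.
Let hw' : Mrb (size w) w. Proof. by rewrite sw. Qed.
Definition Ew := (state lf w n).2.
Let I : Inv2 lf w n (state lf w n).1 Ew.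
Proof. by have := Inv2_state lf hw' (leqnn _); rewrite sw. Qed.

Lemma Vn : (state lf w n).1 = [::].
Proof. have := iRb I; rewrite -sw drop_size /= size_eq0 => /eqP //. Qed.

Lemma out_complete a : 0 < a <= n -> isOut (wt w a) -> a \in map fst Ew.
Proof.
move=> ha ho; apply/negPn/negP => hn.
have : a \in (state lf w n).1.
  by rewrite (iV I) mem_filter ho hn mem_iota add1n ltnS.
by rewrite Vn.
Qed.

Lemma ech_H1 a b : ech Ew a b -> a < b < n.
Proof. by move=> /(iE I) /and5P [/= _ h1 h2 _ _]; rewrite -ltnS h1. Qed.

Lemma ech_H2 a b b' : ech Ew a b -> ech Ew a b' -> b = b'.
Proof. by move=> h h'; have [] := uniq_map_eq (iU1 I) h h' erefl. Qed.

Lemma ech_H3 a a' b : ech Ew a b -> ech Ew a' b -> a = a'.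
Proof. by move=> h h'; have [] := uniq_map_eq (iU2 I) h h' erefl. Qed.

Lemma choice2 a b a' b' : (a, b) \in Ew -> (a', b') \in Ew -> a' != a -> a' < b -> b < b' ->
  if lf then a < a' else a' < a.
Proof.
move=> ab a'b' a'a a'b bb'; apply: (iCh I ab) => //.
by apply/orP; right; apply/hasP; exists (a', b') => //=; rewrite eqxx bb'.
Qed.

Lemma out_char (a : 'I_n) : isOut (wt w a.+1) = [exists j : 'I_n, ech Ew a j].
Proof.
apply/idP/existsP.
  move=> ho; have /mapP [[x y] xy /= ax] := out_complete (ltn_ord a : 0 < a.+1 <= n) ho.
  have /and5P [/= _ h1 h2 _ _] := iE I xy.
  have yn : y.-1 < n by rewrite -ltnS prednK ?(leq_trans _ h1) //; lia.
  exists (Ordinal yn); rewrite /ech /= prednK; first by rewrite ax.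
  by rewrite -ax in h1; apply: leq_trans h1.
by case=> j /(iE I) /and5P [].
Qed.

Lemma in_char (b : 'I_n) : isIn (wt w b.+1) = [exists i : 'I_n, ech Ew i b].
Proof.
apply/idP/existsP.
  move=> hi; have /mapP [[x y] xy /= bx] := iIn I (ltn_ord b : 0 < b.+1 <= n) hi.
  have /and5P [/= x0 h1 h2 _ _] := iE I xy.
  have xn : x.-1 < n by rewrite -bx in h1; lia.
  exists (Ordinal xn); rewrite /ech /= prednK //; by rewrite bx.
by case=> i /(iE I) /and5P [].
Qed.

Lemma edge_comp2 (i j : 'I_n) : is_edge (components n Ew) i j = ech Ew i j.
Proof. exact: (is_edge_comp ech_H1 ech_H2 ech_H3 i j). Qed.
End Final2.

Definition typ (o i : bool) : step :=
  if o then (if i then BlueE else NE) else (if i then SE else RedE).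

Section Sim.
Variables (lf : bool) (n : nat) (G : nat -> nat -> bool).
Hypothesis G1 : forall a b, G a b -> [&& 0 < a, a < b & b <= n].
Hypothesis G2 : forall a b b', G a b -> G a b' -> b = b'.
Hypothesis G3 : forall a a' b, G a b -> G a' b -> a = a'.
Hypothesis G4 : forall a b a' b', G a b -> G a' b' -> a' != a -> a' < b -> b < b' ->
  if lf then a < a' else a' < a.

Definition outG a := has (G a) (iota 1 n).
Definition inG b := has (fun a => G a b) (iota 1 n).
Definition wG := [seq typ (outG a) (inG a) | a <- iota 1 n].
Definition openG t a := outG a && ~~ has (G a) (iota 1 t).

Lemma size_wG : size wG = n. Proof. by rewrite size_map size_iota. Qed.

Lemma nth_wG t : t < n -> nth RedE wG t = typ (outG t.+1) (inG t.+1).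
Proof.
move=> tn; rewrite (nth_map 0) ?size_iota // nth_iota //.
Qed.

Lemma outGP a b : G a b -> outG a.
Proof.
move=> h; apply/hasP; exists b => //; have /and3P [_ h1 h2] := G1 h.
rewrite mem_iota add1n ltnS h2 andbT; lia.
Qed.

Lemma inGP a b : G a b -> inG b.
Proof.
move=> h; apply/hasP; exists a => //; have /and3P [h0 h1 h2] := G1 h.
rewrite mem_iota add1n ltnS h0 /=; lia.
Qed.

Lemma hasG_S a t : has (G a) (iota 1 t.+1) = has (G a) (iota 1 t) || G a t.+1.
Proof. by rewrite iotaS1 has_rcons orbC. Qed.

Lemma openG_top t : openG t.+1 t.+1 = outG t.+1.
Proof.
rewrite /openG; have -> : has (G t.+1) (iota 1 t.+1) = false; last by rewrite andbT.
apply/hasP => [[b]]; rewrite mem_iota => /andP [_ bt] /G1 /and3P [_ h _]; lia.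
Qed.

Lemma openG_S t y : openG t.+1 y = openG t y && ~~ G y t.+1.
Proof. by rewrite /openG hasG_S negb_or andbA. Qed.

Definition Inv3 t (V : seq nat) (E : seq (nat * nat)) :=
  V = [seq a <- iota 1 t | openG t a] /\ (forall a b, ((a,b) \in E) = G a b && (b <= t)).

Lemma Inv3_0 : Inv3 0 [::] [::].
Proof.
split => // a b; rewrite in_nil leqn0; case: (b =P 0) => [->|]; last by rewrite andbF.
by case h: (G a 0) => //; have := G1 h; lia.
Qed.

Lemma openG_lt t a : openG t a -> exists b, G a b /\ t < b.
Proof.
case/andP=> /hasP [b _ gb] nh; exists b; split=> //; rewrite ltnNge; apply/negP => bt.
apply: (negP nh); apply/hasP; exists b => //; have /and3P [_ h _] := G1 gb.
rewrite mem_iota add1n ltnS bt andbT; lia.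
Qed.

Lemma pick_a t V E a : Inv3 t V E -> G a t.+1 -> a \in V /\ pickV lf V 1 = a.
Proof.
move=> [hV _] h.
have aV : a \in V.
  rewrite hV mem_filter; have /and3P [a0 at1 _] := G1 h.
  rewrite mem_iota add1n a0 at1 andbT /openG (outGP h) /=.
  rewrite andbT; apply/hasPn => b; rewrite mem_iota => /andP [_ bt]; apply/negP => gb.
  have := G2 h gb; lia.
split=> //.
have sV : sorted ltn V.
  by rewrite hV; apply: sorted_filter; [exact: ltn_trans | exact: iota_ltn_sorted].
have V0 : V != [::] by case: (V) aV.
have [xV xext] := pickV_spec lf sV V0.
case: (pickV lf V 1 =P a) => // xa; exfalso.
move: xV xext xa; set x := pickV lf V 1 => xV xext xa.
have := xV; rewrite hV mem_filter => /andP [/openG_lt [b' [gb' tb']]].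
rewrite mem_iota add1n => /andP [_ xt].
have b't : b' != t.+1 by apply/eqP => e; rewrite e in gb'; apply: xa; apply: G3 gb' h.
have xa' : x != a by apply/eqP.
have := G4 h gb' xa' xt; rewrite ltn_neqAle eq_sym b't tb' => /(_ isT).
have := xext a aV; rewrite eq_sym xa' => /(_ isT).
case: lf; lia.
Qed.

Lemma Inv3_S t V E : t < n -> Inv3 t V E ->
  Inv3 t.+1 (stepf lf (V,E) (t.+1, nth RedE wG t)).1 (stepf lf (V,E) (t.+1, nth RedE wG t)).2.
Proof.
move=> tn I; rewrite nth_wG //.
have [hV hE] := I.
have uV : uniq V by rewrite hV filter_uniq // iota_uniq.
case hi: (inG t.+1).
  have [a _ ga] := hasP hi.
  have [aV pa] := pick_a I ga.
  have Vf : [seq y <- iota 1 t | openG t.+1 y] = rem a V.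
    rewrite (rem_filter _ uV) hV -filter_predI; apply: eq_filter => y /=.
    rewrite openG_S; case: (y =P a) => [->|ya]; first by rewrite ga andbF.
    have gy : G y t.+1 = false.
      by apply/negbTE/negP => gy; apply: ya; exact: G3 gy ga.
    by rewrite gy andbT; case: (y =P a).
  have Ef u v : ((u, v) \in (a, t.+1) :: E) = G u v && (v <= t.+1).
    rewrite inE hE [v <= t.+1]leq_eqVlt ltnS; case: (v =P t.+1) => [->|vt] /=.
      rewrite ltnn andbF orbF andbT xpair_eqE eqxx andbT.
      apply/eqP/idP => [->//|gu]; exact: G3 gu ga.
    rewrite xpair_eqE; case: (v == t.+1) / eqP => // _; by rewrite andbF.
  case ho: (outG t.+1) => /=; rewrite pa; split => //.
  - by rewrite iotaS1 filter_rcons openG_top ho Vf.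
  - by rewrite iotaS1 filter_rcons openG_top ho Vf.
have nG y : G y t.+1 = false by apply/negbTE/negP => gy; rewrite (inGP gy) in hi.
have Vf : [seq y <- iota 1 t | openG t.+1 y] = V.
  by rewrite hV; apply: eq_filter => y; rewrite openG_S nG andbT.
have Ef u v : ((u, v) \in E) = G u v && (v <= t.+1).
  rewrite hE [v <= t.+1]leq_eqVlt ltnS; case: (v =P t.+1) => [->|vt] //=.
  by rewrite nG ltnn.
case ho: (outG t.+1) => /=; split => //.
- by rewrite iotaS1 filter_rcons openG_top ho Vf.
- by rewrite iotaS1 filter_rcons openG_top ho Vf.
Qed.

Definition stG t := state lf wG t.

Lemma Inv3_state t : t <= n -> Inv3 t (stG t).1 (stG t).2.
Proof.
elim: t => [|t IH] ht; first by rewrite /stG state0; apply: Inv3_0.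
rewrite /stG state_S ?size_wG //.
have := Inv3_S ht (IH (ltnW ht)).
by rewrite /stG; case: (state lf wG t).
Qed.

Lemma rb_state k : k <= n -> rb_from (size (stG (n - k)).1) (drop (n - k) wG).
Proof.
elim: k => [|k IH] hk.
  rewrite subn0 -{2}size_wG drop_size /=.
  have [-> _] := Inv3_state (leqnn n).
  rewrite size_eq0; apply/eqP; apply/eqP; rewrite -[_ == _]negbK -has_filter.
  by apply/hasPn => a _; rewrite /openG /outG andbN.
set t := n - k.+1.
have tn : t < n by rewrite /t; lia.
have tS : t.+1 = n - k by rewrite /t; lia.
have := IH (ltnW hk); rewrite -tS /stG state_S ?size_wG //.
rewrite [drop t wG](drop_nth RedE) ?size_wG // nth_wG //.
have I := Inv3_state (ltnW tn).
case hi: (inG t.+1).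
  have [a _ ga] := hasP hi.
  have [aV pa] := pick_a I ga.
  have sz : 0 < size (stG t).1 by case: ((stG t).1) aV.
  case ho: (outG t.+1) => /=; rewrite /stG in pa sz aV *; rewrite pa.
    by rewrite size_rcons size_rem // prednK // => ->; rewrite sz.
  by rewrite size_rem // => ->; rewrite sz.
case ho: (outG t.+1) => //=.
by rewrite size_rcons.
Qed.

Lemma wG_Mrb : Mrb n wG.
Proof.
rewrite /Mrb size_wG eqxx /=.
have := rb_state (leqnn n); rewrite subnn drop0 /stG state0 //.
Qed.

Lemma EG a b : ((a, b) \in (stG n).2) = G a b.
Proof.
have [_ ->] := Inv3_state (leqnn n).
by case h: (G a b) => //=; have /and3P [] := G1 h.
Qed.
End Sim.

Definition goodP lf n (P : {set {set 'I_n}}) := if lf then nonnesting P else noncrossing P.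

Lemma memS lf n (P : {set {set 'I_n}}) :
  (P \in (if lf then NN n else NC n)) = partition P [set: 'I_n] && goodP lf P.
Proof. by case: lf; rewrite inE. Qed.

Definition GP n (P : {set {set 'I_n}}) (a b : nat) : bool :=
  [exists i : 'I_n, exists j : 'I_n, [&& a == i.+1, b == j.+1 & is_edge P i j]].

Section GPsec.
Variables (lf : bool) (n : nat) (P : {set {set 'I_n}}).
Hypothesis hP : partition P [set: 'I_n].
Hypothesis gP : goodP lf P.

Lemma GP_ord (i j : 'I_n) : GP P i.+1 j.+1 = is_edge P i j.
Proof.
apply/existsP/idP => [[i' /existsP [j' /and3P [/eqP a /eqP b e]]]|e].
  have -> : i = i' by apply: val_inj; case: a.
  have -> : j = j' by apply: val_inj; case: b.
  exact: e.
by exists i; apply/existsP; exists j; rewrite !eqxx e.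
Qed.

Lemma GP_inv a b : GP P a b -> exists i j : 'I_n, [/\ a = i.+1, b = j.+1 & is_edge P i j].
Proof. by case/existsP=> i /existsP [j /and3P [/eqP -> /eqP -> e]]; exists i, j. Qed.

Lemma GP1 a b : GP P a b -> [&& 0 < a, a < b & b <= n].
Proof.
case/GP_inv => i [j [-> -> e]]; have [_ ij _] := is_edgeP hP e.
by rewrite /= ltnS ij ltn_ord.
Qed.

Lemma GP2 a b b' : GP P a b -> GP P a b' -> b = b'.
Proof.
case/GP_inv => i [j [-> -> e]] /GP_inv [i' [j' [[ii'] -> e']]].
have ii : i = i' by apply: val_inj.
by subst i'; rewrite (edge_out hP e e').
Qed.

Lemma GP3 a a' b : GP P a b -> GP P a' b -> a = a'.
Proof.
case/GP_inv => i [j [-> -> e]] /GP_inv [i' [j' [-> [jj'] e']]].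
have jj : j = j' by apply: val_inj.
by subst j'; rewrite (edge_in hP e e').
Qed.

Lemma GP4 a b a' b' : GP P a b -> GP P a' b' -> a' != a -> a' < b -> b < b' ->
  if lf then a < a' else a' < a.
Proof.
case/GP_inv => i [j [-> -> e]] /GP_inv [i' [j' [-> -> e']]].
rewrite !ltnS eqSS => ne h1 h2.
move: gP; rewrite /goodP; case: lf.
  move=> /forallP /(_ i') /forallP /(_ j') /forallP /(_ i) /forallP /(_ j).
  rewrite e e' /= => hh.
  have [_ ij _] := is_edgeP hP e.
  case: (ltngtP i i') => // h; last by move: ne; rewrite h eqxx.
  by move: hh; rewrite h ij h2.
move=> /forallP /(_ i) /forallP /(_ j) /forallP /(_ i') /forallP /(_ j').
rewrite e e' /= => hh.
case: (ltngtP i' i) => // h; last by move: ne; rewrite h eqxx.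
by move: hh; rewrite h h1 h2.
Qed.
End GPsec.

Lemma main_gen lf n :
  bij_onto (Mrb n) (fun w => phi_gen lf n w (nseq n 1)) (if lf then NN n else NC n).
Proof.
split.
- move=> w hw; have sw : size w = n by case/andP: hw => /eqP.
  rewrite (phi_state _ sw) memS components_partition /=.
  rewrite /goodP; case: lf hw => hw.
    apply/forallP=> i1; apply/forallP=> j1; apply/forallP=> i2; apply/forallP=> j2.
    apply/implyP => /andP [e1 e2]; apply/negP => /and3P [h1 h2 h3].
    rewrite (edge_comp2 _ hw) in e1; rewrite (edge_comp2 _ hw) in e2.
    have := choice2 hw e2 e1; rewrite eqSS ltnS ltnS.
    rewrite neq_ltn h1 /= (ltn_trans h1 h2) h3 => /(_ isT isT isT).
    by rewrite ltnS ltnNge (ltnW h1).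
  apply/forallP=> i1; apply/forallP=> j1; apply/forallP=> i2; apply/forallP=> j2.
  apply/implyP => /andP [e1 e2]; apply/negP => /and3P [h1 h2 h3].
  rewrite (edge_comp2 _ hw) in e1; rewrite (edge_comp2 _ hw) in e2.
  have := choice2 hw e1 e2; rewrite eqSS ltnS ltnS.
  rewrite neq_ltn h1 orbT h2 h3 => /(_ isT isT isT).
  by rewrite ltnS ltnNge (ltnW h1).
- move=> w1 w2 hw1 hw2.
  have sw1 : size w1 = n by case/andP: hw1 => /eqP.
  have sw2 : size w2 = n by case/andP: hw2 => /eqP.
  rewrite /= (phi_state _ sw1) (phi_state _ sw2) => hc.
  have he (i j : 'I_n) : ech (Ew lf n w1) i j = ech (Ew lf n w2) i j.
    by rewrite -(edge_comp2 lf hw1) -(edge_comp2 lf hw2) /Ew hc.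
  apply: (@eq_from_nth _ RedE); first by rewrite sw1 sw2.
  move=> t; rewrite sw1 => tn.
  have o := out_char lf hw1 (Ordinal tn); have o2 := out_char lf hw2 (Ordinal tn).
  have i := in_char lf hw1 (Ordinal tn); have i2 := in_char lf hw2 (Ordinal tn).
  apply: step_eq.
    rewrite -[nth _ w1 t]/(wt w1 t.+1) -[nth _ w2 t]/(wt w2 t.+1) o o2.
    by apply: eq_existsb => j; rewrite he.
  rewrite -[nth _ w1 t]/(wt w1 t.+1) -[nth _ w2 t]/(wt w2 t.+1) i i2.
  by apply: eq_existsb => j; rewrite he.
- move=> P; rewrite memS => /andP [hP gP].
  have G1 := GP1 hP; have G2 := GP2 hP; have G3 := GP3 hP; have G4 := GP4 hP gP.
  exists (wG n (GP P)); first exact: wG_Mrb G1 G2 G3 G4.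
  rewrite (phi_state _ (size_wG _ _)).
  set E := (state lf (wG n (GP P)) n).2.
  have hE a b : ech E a b = GP P a.+1 b.+1 by rewrite /ech (EG G1 G2 G3 G4).
  have H1 a b : ech E a b -> a < b < n by rewrite hE => /G1 /and3P [_ h1 h2]; apply/andP.
  have H2 a b b' : ech E a b -> ech E a b' -> b = b'.
    by rewrite !hE => h h'; have [] := G2 _ _ _ h h'.
  have H3 a a' b : ech E a b -> ech E a' b -> a = a'.
    by rewrite !hE => h h'; have [] := G3 _ _ _ h h'.
  apply: partition_eq => //; first exact: components_partition.
  by move=> i j; rewrite (is_edge_comp H1 H2 H3) hE GP_ord.
Qed.

Theorem corollary3p3 (n : nat) : 0 < n ->
  bij_onto (Mrb n) (fun w => phi_r n w (nseq n 1)) (NC n) /\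
  bij_onto (Mrb n) (fun w => phi_l n w (nseq n 1)) (NN n).
Proof. by move=> _; split; [exact: (main_gen false n)|exact: (main_gen true n)]. Qed.
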